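(* Let $n\ge1$, $p \in [0,1/2]$, $q=1-p$, and for $r\ge0$ let $\mu_r = \mathbb{E}(X-np)^r$ where $X\sim\mathrm{Bin}(n,p)$. Define polynomials $\nu_r(x)$ recursively by $\nu_0 = 1$, $\nu_1 = 0$ and, for $r\ge2$, \[ \nu_r(x) = x \sum_{j=0}^{r-2} \binom{r-1}{j} \nu_j(x). \] Then $\mu_r \leq \nu_r(npq)$ for every $r\ge0$. *)

(* Defs.v *)
From HB Require Import structures.
From mathcomp Require Import all_boot all_order all_algebra.
Set Implicit Arguments. Unset Strict Implicit. Unset Printing Implicit Defensive.
Import Order.TTheory GRing.Theory Num.Theory.
Local Open Scope ring_scope.

Definition binom_central_moment (R : nzRingType) (n : nat) (p : R) (r : nat) : R :=
  \sum_(k < n.+1) ('C(n, k))%:R * p ^+ k * (1 - p) ^+ (n - k)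
                   * (k%:R - n%:R * p) ^+ r.

(* nu_seq m = [:: nu_0; nu_1; ...; nu_m], with nu_0 = 1, nu_1 = 0 and for
   r >= 2: nu_r = 'X * \sum_(j = 0..r-2) C(r-1, j) nu_j.  *)
Fixpoint nu_seq (R : nzRingType) (m : nat) : seq {poly R} :=
  match m with
  | 0 => [:: 1]
  | m'.+1 =>
      let s := nu_seq R m' in
      rcons s (if m' is 0 then 0
               else 'X * \sum_(j < m') (('C(m', j))%:R *: s`_j))
  end.

Definition nu (R : nzRingType) (r : nat) : {poly R} := (nu_seq R r)`_r.

(* Main.v *)
Require Import Defs.
From HB Require Import structures.
From mathcomp Require Import all_boot all_order all_algebra.
From mathcomp Require Import ring lra zify.
Import Order.TTheory GRing.Theory Num.Theory.
Local Open Scope ring_scope.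

Section Nu.
Variable R : realFieldType.

Lemma size_nu_seq m : size (nu_seq R m) = m.+1.
Proof. by elim: m => [|m IH] //=; rewrite size_rcons IH. Qed.

Lemma nu_seq_nth m j : (j <= m)%N -> (nu_seq R m)`_j = nu R j.
Proof.
elim: m => [|m IH] hj.
  by move: hj; rewrite leqn0 => /eqP ->.
rewrite leq_eqVlt in hj; case/orP: hj => [/eqP -> //|hj].
by rewrite /= nth_rcons size_nu_seq hj IH.
Qed.

Lemma nu0 : nu R 0 = 1. Proof. by []. Qed.
Lemma nu1 : nu R 1 = 0. Proof. by []. Qed.
Lemma nuSS r : nu R r.+2 = 'X * \sum_(j < r.+1) ('C(r.+1, j))%:R *: nu R j.
Proof.
rewrite /nu -[nu_seq R r.+2]/(rcons (nu_seq R r.+1) ('X * \sum_(j < r.+1) ('C(r.+1, j))%:R *: (nu_seq R r.+1)`_j)).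
rewrite nth_rcons size_nu_seq ltnn eqxx.
congr (_ * _); apply: eq_bigr => j _.
by rewrite nu_seq_nth // ltnW.
Qed.

Lemma nu_mono m : forall j, (j < m)%N -> forall x y : R, 0 <= y -> y <= x ->
  0 <= (nu R j).[y] /\ (nu R j).[y] <= (nu R j).[x].
Proof.
elim: m => [//|m IH] j hj x y y0 yx.
case: j hj => [|[|r]] hj.
- by rewrite nu0 !hornerE; lra.
- by rewrite nu1 !hornerE.
rewrite nuSS !hornerE !horner_sum.
have H : forall i : 'I_r.+1, 0 <= (('C(r.+1, i))%:R *: nu R i).[y] /\
   (('C(r.+1, i))%:R *: nu R i).[y] <= (('C(r.+1, i))%:R *: nu R i).[x].
  move=> i; rewrite !hornerE.
  have hi : (i < m)%N by have := ltn_ord i; lia.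
  have [h1 h2] := IH i hi x y y0 yx.
  by split; [apply: mulr_ge0 | apply: ler_wpM2l].
split.
  by apply: mulr_ge0 => //; apply: sumr_ge0 => i _; case: (H i).
apply: ler_pM => //.
  by apply: sumr_ge0 => i _; case: (H i).
by apply: ler_sum => i _; case: (H i).
Qed.

Lemma nu_at0 r : (nu R r).[0] = (r == 0)%:R.
Proof.
case: r => [|[|r]]; first by rewrite nu0 hornerE.
  by rewrite nu1 hornerE.
by rewrite nuSS !hornerE.
Qed.
End Nu.
Section Mu.
Variable R : realFieldType.
Variable p : R.
Local Notation mu n r := (binom_central_moment n p r).

Lemma mu0 n : mu n 0 = 1.
Proof.
have : (1 - p + p) ^+ n = 1 by rewrite subrK expr1n.
rewrite exprDn => <-; rewrite /binom_central_moment.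
apply: eq_bigr => i _; rewrite -mulr_natl; ring.
Qed.

Definition A m c s := \sum_(i < m.+1) ('C(m, i))%:R * p ^+ i * (1 - p) ^+ (m - i)
   * (i%:R - m%:R * p + c) ^+ s.

Lemma A_expand m c s : A m c s =
  \sum_(j < s.+1) ('C(s, j))%:R * c ^+ (s - j) * mu m j.
Proof.
rewrite /A /binom_central_moment.
transitivity (\sum_(i < m.+1) \sum_(j < s.+1) ('C(s, j))%:R * c ^+ (s - j) *
  (('C(m, i))%:R * p ^+ i * (1 - p) ^+ (m - i) * (i%:R - m%:R * p) ^+ j)).
  apply: eq_bigr => i _; rewrite (addrC _ c) (exprDn c) mulr_sumr.
  by apply: eq_bigr => j _; rewrite -mulr_natl; ring.
by rewrite exchange_big; apply: eq_bigr => j _; rewrite mulr_sumr.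
Qed.

Lemma mu_rec n r : mu n.+1 r.+1 =
  n.+1%:R * p * (1 - p) * (A n (1 - p) r - A n (- p) r).
Proof.
rewrite /binom_central_moment.
set E := fun k : nat => (k%:R - n.+1%:R * p : R).
transitivity (\sum_(k < n.+2) ('C(n.+1, k))%:R * p ^+ k * (1 - p) ^+ (n.+1 - k)
     * E k ^+ r * (k%:R * (1 - p))
  - \sum_(k < n.+2) ('C(n.+1, k))%:R * p ^+ k * (1 - p) ^+ (n.+1 - k)
     * E k ^+ r * ((n.+1 - k)%:R * p)).
  rewrite -sumrB; apply: eq_bigr => k _.
  rewrite natrB; last exact: ltn_ord k.
  rewrite /E exprS; ring.
rewrite big_ord_recl [X in _ - X]big_ord_recr /= subnn !mul0r !mulr0 add0r addr0.
rewrite mulrBr; congr (_ - _); rewrite /A mulr_sumr; apply: eq_bigr => i _.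
- have hb : ('C(n.+1, i.+1)%:R * (i.+1)%:R : R) = n.+1%:R * ('C(n, i))%:R.
    by rewrite -!natrM mulnC -mul_bin_diag.
  have e : E (bump 0 i) = i%:R - n%:R * p + (1 - p).
    by rewrite /E /bump /= -!natr1; ring.
  rewrite e subSS.
  transitivity (('C(n.+1, i.+1)%:R * (i.+1)%:R) * (p * (1 - p) * (p ^+ i *
     (1 - p) ^+ (n - i) * (i%:R - n%:R * p + (1 - p)) ^+ r))).
    rewrite /bump /= !add1n exprS; ring.
  rewrite hb; ring.
- have hb : ('C(n.+1, i)%:R * (n.+1 - i)%:R : R) = n.+1%:R * ('C(n, i))%:R.
    by rewrite -!natrM mulnC -mul_bin_down.
  have e : E i = i%:R - n%:R * p + (- p).
    by rewrite /E -!natr1; ring.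
  have hs : (n.+1 - i = (n - i).+1)%N by rewrite subSn //; have := ltn_ord i.
  rewrite /= e hs; rewrite hs in hb.
  transitivity (('C(n.+1, i)%:R * ((n - i).+1)%:R) * (p * (1 - p) * (p ^+ i *
     (1 - p) ^+ (n - i) * (i%:R - n%:R * p + (- p)) ^+ r))).
    rewrite exprS; ring.
  rewrite hb; ring.
Qed.
Lemma mu_rec2 n r : mu n.+1 r.+1 = n.+1%:R * p * (1 - p) *
  \sum_(j < r.+1) ('C(r, j))%:R * ((1 - p) ^+ (r - j) - (- p) ^+ (r - j)) * mu n j.
Proof.
rewrite mu_rec !A_expand -sumrB; congr (_ * _); apply: eq_bigr => j _; ring.
Qed.

Lemma d_bound k : (0 < k)%N -> 0 <= p -> p <= 2^-1 ->
  0 <= (1 - p) ^+ k - (- p) ^+ k <= 1.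
Proof.
move=> k0 p0 ph.
have q0 : 0 <= 1 - p by lra.
have q1 : 1 - p <= 1 by lra.
have pq : p <= 1 - p by lra.
have p1 : p <= 1 by lra.
have hq : (1 - p) ^+ k <= 1 - p.
  clear -k0 q0 q1.
  by case: k k0 => // k _; rewrite exprS; apply: ler_piMr => //; exact: exprn_ile1.
have hp : p ^+ k <= p.
  clear -k0 p0 p1.
  by case: k k0 => // k _; rewrite exprS; apply: ler_piMr => //; exact: exprn_ile1.
have hp0 : 0 <= p ^+ k by apply: exprn_ge0.
have hpq : p ^+ k <= (1 - p) ^+ k by apply: lerXn2r.
rewrite exprNn -(signr_odd _ k); case hk: (odd k) => /=; rewrite ?expr1 ?expr0.
  apply/andP; split; lra.
apply/andP; split; lra.
Qed.
End Mu.

Lemma main (R : realFieldType) (p : R) : 0 <= p -> p <= 2^-1 ->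
  forall n r, 0 <= binom_central_moment n p r /\
    binom_central_moment n p r <= (nu R r).[n%:R * p * (1 - p)].
Proof.
move=> p0 ph n; elim: n => [|n IH] r.
  rewrite /binom_central_moment big_ord1 /= !mul0r subrr expr0n nu_at0.
  by rewrite bin0 subn0 !expr0 !mul1r; case: (r == 0%N) => /=; lra.
have q0 : 0 <= 1 - p by lra.
case: r => [|r].
  by rewrite mu0 nu0 !hornerE; lra.
set x := n.+1%:R * p * (1 - p).
set y := n%:R * p * (1 - p).
have y0 : 0 <= y by rewrite /y !mulr_ge0 // ler0n.
have yx : y <= x.
  by rewrite /x /y -!mulrA ler_wpM2r ?mulr_ge0 // ler_nat.
have x0 : 0 <= x by lra.
rewrite mu_rec2 -/x big_ord_recr /= subnn !expr0 subrr mulr0 mul0r addr0.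
have term : forall j : 'I_r, 0 <= 'C(r, j)%:R * ((1 - p) ^+ (r - j) - (- p) ^+ (r - j))
   * binom_central_moment n p j /\
   'C(r, j)%:R * ((1 - p) ^+ (r - j) - (- p) ^+ (r - j))
   * binom_central_moment n p j <= 'C(r, j)%:R * (nu R j).[x].
  move=> j.
  have /andP [d0 d1] := @d_bound R p (r - j) (ltac:(by rewrite subn_gt0)) p0 ph.
  have [m0 m1] := IH j.
  have [_ n1] := @nu_mono R j.+1 j (ltnSn j) x y y0 yx.
  split; first by rewrite !mulr_ge0 // ler0n.
  rewrite -mulrA ler_wpM2l ?ler0n //.
  have : ((1 - p) ^+ (r - j) - (- p) ^+ (r - j)) * binom_central_moment n p j
         <= binom_central_moment n p j by rewrite ler_piMl.
  move: n1; rewrite -/y; lra.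
case: r term => [|r] term.
  by rewrite big_ord0 mulr0 nu1 hornerE; lra.
rewrite nuSS !hornerE horner_sum.
split.
  by apply: mulr_ge0 => //; apply: sumr_ge0 => j _; case: (term j).
apply: ler_wpM2l => //; apply: ler_sum => j _; rewrite hornerE.
by case: (term j).
Qed.

Theorem proposition18 (R : realFieldType) (n : nat) (p : R) (r : nat) :
  (0 < n)%N -> 0 <= p -> p <= 2^-1 ->
  binom_central_moment n p r <= (nu R r).[n%:R * p * (1 - p)].
Proof.
by move=> _ p0 ph; case: (@main R p p0 ph n r).
Qed.
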